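(* Let $n\ge 1$, $m\ge 1$, and suppose: each $u_x$ ($x=1,\dots,m$) is concave and differentiable; $c$ is convex and differentiable; and at least one of the following holds: (a) all but at most one of the $u_x$ are strictly concave, or (b) $c$ is strictly convex. Then the potential function $$\Phi(\mathbf{s})=\sum_{x=1}^m\left[\left(1-\frac1n\right)\int_0^{s_x}\frac{u_x(t)}{t}\,\mathrm{d}t+\frac1n u_x(s_x)\right]-n\,c(\mathbf{s}/n)$$ is strictly concave on $n\Delta^{m-1}=\{\mathbf{s}\in\mathbb{R}^m:\mathbf{s}\ge0,\ \sum_x s_x=n\}$.
   Context: Here $\Delta^{m-1}=\{\mathbf{v}\in\mathbb{R}^m:\mathbf{v}\ge 0,\ \mathbf{v}^{T}\mathbf{1}=1\}$; for each $x\in\{1,\dots,m\}$, $u_x:\mathbb{R}_{\ge 0}\to\mathbb{R}_{\ge 0}$ satisfies $u_x(0)=0$; and $c:\Delta^{m-1}\to\mathbb{R}_{\ge 0}$. *)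

(* Defs.v *)
From HB Require Import structures.
From mathcomp Require Import all_boot all_order all_algebra.
From mathcomp Require Import all_classical all_reals all_analysis.
Set Implicit Arguments. Unset Strict Implicit. Unset Printing Implicit Defensive.
Import Order.TTheory GRing.Theory Num.Theory.
Import numFieldNormedType.Exports.
Local Open Scope classical_set_scope.
Local Open Scope ring_scope.

Section Defs.
Variable R : realType.

Definition concave_on_nonneg (f : R -> R) : Prop :=
  forall a b t : R, 0 <= a -> 0 <= b -> 0 <= t <= 1 ->
    t * f a + (1 - t) * f b <= f (t * a + (1 - t) * b).

Definition strictly_concave_on_nonneg (f : R -> R) : Prop :=
  forall a b t : R, 0 <= a -> 0 <= b -> a != b -> 0 < t < 1 ->
    t * f a + (1 - t) * f b < f (t * a + (1 - t) * b).

Definition differentiable_on_nonneg (f : R -> R) : Prop :=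
  (forall t : R, 0 < t -> derivable f t 1) /\
  cvg ((fun h : R => h^-1 * (f h - f 0)) @ 0^'+).

Definition scaled_simplex (m : nat) (k : R) : set 'rV[R]_m :=
  [set v | (forall i, 0 <= v ord0 i) /\ \sum_i v ord0 i = k].

Definition simplex (m : nat) : set 'rV[R]_m := @scaled_simplex m 1.

Definition convex_on (m : nat) (D : set 'rV[R]_m) (c : 'rV[R]_m -> R) : Prop :=
  forall a b (t : R), D a -> D b -> 0 <= t <= 1 ->
    c (t *: a + (1 - t) *: b) <= t * c a + (1 - t) * c b.

Definition strictly_convex_on (m : nat) (D : set 'rV[R]_m) (c : 'rV[R]_m -> R) : Prop :=
  forall a b (t : R), D a -> D b -> a != b -> 0 < t < 1 ->
    c (t *: a + (1 - t) *: b) < t * c a + (1 - t) * c b.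

Definition strictly_concave_on (m : nat) (D : set 'rV[R]_m) (F : 'rV[R]_m -> R) : Prop :=
  forall a b (t : R), D a -> D b -> a != b -> 0 < t < 1 ->
    t * F a + (1 - t) * F b < F (t *: a + (1 - t) *: b).

Definition potential (m n : nat) (u : 'I_m -> R -> R) (c : 'rV[R]_m -> R)
    (s : 'rV[R]_m) : R :=
  \sum_(x < m)
     ((1 - n%:R^-1) * Rintegral (@lebesgue_measure R) `[0, s ord0 x]
                        (fun t => u x t / t)
      + n%:R^-1 * u x (s ord0 x))
  - n%:R * c (n%:R^-1 *: s).

End Defs.

(* Main.v *)
Require Import Defs.
From HB Require Import structures.
From mathcomp Require Import all_boot all_order all_algebra.
From mathcomp Require Import all_classical all_reals all_analysis.
From mathcomp Require Import ring lra.
Import Order.TTheory GRing.Theory Num.Theory.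
Import numFieldNormedType.Exports.
Local Open Scope classical_set_scope.
Local Open Scope ring_scope.

Section Helpers.
Variable R : realType.
Notation mu := (@lebesgue_measure R).

Lemma int_itv (f : R -> R) (x y M : R) :
  measurable_fun `[x, y] f -> (forall t, x <= t <= y -> `|f t| <= M) ->
  mu.-integrable `[x, y] (EFin \o f).
Proof.
move=> mf fM; apply: measurable_bounded_integrable => //.
  have H : (mu `[x, y]%classic < +oo)%E.
    rewrite lebesgue_measure_itv /=; case: ifP => _; last exact: ltry.
    by rewrite -EFinD ltry.
  exact: H.
rewrite /bounded_near; near=> N => t /= Ht; apply: (le_trans (fM t _)).
  by move: Ht; rewrite /= in_itv.
near: N; apply: nbhs_pinfty_ge; exact: num_real.
Unshelve. all: by end_near.
Qed.

Lemma mu_oc (a p : R) : a <= p -> fine (mu `]a, p]) = p - a.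
Proof.
move=> ap; rewrite lebesgue_measure_itv /=.
rewrite lte_fin; case: ltP => //= h.
have -> : p = a by apply/eqP; rewrite eq_le ap h.
by rewrite subrr.
Qed.
End Helpers.

Section G.
Variable R : realType.
Notation mu := (@lebesgue_measure R).
Variable u : R -> R.
Hypothesis hc : concave_on_nonneg u.
Hypothesis h0 : u 0 = 0.
Hypothesis hpos : forall t, 0 <= t -> 0 <= u t.
Hypothesis hd : differentiable_on_nonneg u.

Let g t := u t / t.

Lemma g_noninc x y : 0 < x -> x <= y -> g y <= g x.
Proof.
move=> x0 xy; have y0 : 0 < y by apply: lt_le_trans xy.
have := hc y 0 (x / y) (ltW y0) (le_refl 0).
rewrite h0 mulr0 addr0 divfK ?gt_eqF // ?mulr0 ?addr0.
have -> : 0 <= x / y <= 1.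
  by rewrite divr_ge0 ?(ltW x0) ?(ltW y0) //= ler_pdivrMr // mul1r.
move=> /(_ isT) H.
rewrite /g ler_pdivlMr //.
have -> : u y / y * x = x / y * u y by ring.
exact: H.
Qed.

Lemma g_ge0 t : 0 <= t -> 0 <= g t.
Proof. by move=> t0; rewrite /g divr_ge0 // hpos. Qed.

Lemma g_bound : exists L, forall t, 0 < t -> g t <= L.
Proof.
case: hd => _ hcv.
exists (lim ((fun h : R => h^-1 * (u h - u 0)) @ 0^'+)) => t t0.
rewrite leNgt; apply/negP => Lt.
have : \forall h \near 0^'+, (h^-1 * (u h - u 0) < g t) /\ (0 < h) /\ (h < t).
  near=> h; split; last split.
  - near: h; exact: (cvgr_lt _ hcv _ Lt).
  - near: h; exact: nbhs_right_gt.
  - near: h; exact: nbhs_right_lt.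
move=> /filter_ex [h [H1 [H2 H3]]].
move: H1; rewrite h0 subr0 mulrC -/(g h).
by rewrite ltNge g_noninc // ltW.
Unshelve. all: by end_near.
Qed.

Lemma g_meas (s : R) : measurable_fun `[0, s] g.
Proof.
have [L HL] := g_bound.
pose h t := if 0 < t then g t else L.
have hni : nonincreasing_fun h.
  move=> x y xy; rewrite /h.
  case: (ltP 0 x) => x0; case: (ltP 0 y) => y0 //.
  - exact: g_noninc.
  - by move: (lt_le_trans x0 xy); rewrite ltNge y0.
  - exact: HL.
apply/measurable_realfun.measurable_fun_itv_obnd_cbndP.
apply: (eq_measurable_fun (D := `]0, s]) h); last exact: measurable_realfun.nonincreasing_measurable.
move=> t; rewrite inE /= in_itv /= => /andP[t0 _].
by rewrite /h t0.
Qed.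

Lemma g_int (s : R) : mu.-integrable `[0, s] (EFin \o g).
Proof.
have [L HL] := g_bound.
apply: (@int_itv R g 0 s `|L| (g_meas s)) => t /andP[t0 ts].
rewrite ger0_norm; last exact: g_ge0.
case: (eqVneq t 0) => [->|tn0]; first by rewrite /g invr0 mulr0.
apply: le_trans (HL t _) (ler_norm L).
by rewrite lt_neqAle eq_sym tn0.
Qed.

Let G (s : R) := Rintegral mu `[0, s] g.

Lemma G_split (a p : R) : 0 <= a -> a <= p -> G p = G a + Rintegral mu `]a, p] g.
Proof.
move=> a0 ap.
have := @Rintegral_itvB R g (BLeft 0) (BRight p) a (g_int p).
rewrite !bnd_simp => /(_ a0 ap) <-.
rewrite /G; ring.
Qed.

Lemma int_oc_lb (a p : R) : 0 <= a -> a <= p -> (p - a) * g p <= Rintegral mu `]a, p] g.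
Proof.
move=> a0 ap.
rewrite -(@mu_oc R _ _ ap) mulrC -Rintegral_cst //.
apply: le_Rintegral => //.
- apply: (integrableS _ _ _ (@int_itv R (fun=> g p) a p `|g p| (measurable_cst (g p)) _)) => //.
  all: try by apply: subset_itvr; rewrite bnd_simp.
- apply: (integrableS _ _ _ (g_int p)) => //.
  by apply: subset_itvr; rewrite bnd_simp.
move=> x; rewrite /= in_itv /= => /andP[ax xp].
apply: g_noninc => //; exact: le_lt_trans ax.
Qed.

Lemma int_oc_ub (p b : R) : 0 < p -> p <= b -> Rintegral mu `]p, b] g <= (b - p) * g p.
Proof.
move=> p0 pb.
rewrite -(@mu_oc R _ _ pb) mulrC -Rintegral_cst //.
apply: le_Rintegral => //.
- apply: (integrableS _ _ _ (g_int b)) => //.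
  by apply: subset_itvr; rewrite bnd_simp ltW.
- apply: (integrableS _ _ _ (@int_itv R (fun=> g p) p b `|g p| (measurable_cst (g p)) _)) => //.
  all: try by apply: subset_itvr; rewrite bnd_simp.
move=> x; rewrite /= in_itv /= => /andP[px xb].
apply: g_noninc => //; exact: ltW.
Qed.

Lemma G_concave (a b t : R) : 0 <= a -> 0 <= b -> 0 <= t <= 1 ->
  t * G a + (1 - t) * G b <= G (t * a + (1 - t) * b).
Proof.
wlog ab : a b t / a <= b.
  move=> H a0 b0 t01; case: (leP a b) => [ab|ba]; first exact: H.
  have e : 1 - (1 - t) = t by ring.
  have K := H b a (1 - t) (ltW ba) b0 a0.
  have t01' : 0 <= 1 - t <= 1 by move: t01 => /andP[? ?]; apply/andP; split; lra.
  move: (K t01'); rewrite e.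
  have -> : (1 - t) * b + t * a = t * a + (1 - t) * b by ring.
  by rewrite addrC.
move=> a0 b0 /andP[t0 t1].
have [->|tn1] := eqVneq t 1.
  by rewrite subrr !mul0r !addr0 !mul1r.
have t1' : t < 1 by rewrite lt_neqAle tn1.
have [eab|nab] := eqVneq a b.
  subst b; have -> : t * a + (1 - t) * a = a by ring.
  by have -> : t * G a + (1 - t) * G a = G a by ring.
have ab' : a < b by rewrite lt_neqAle nab.
set p := t * a + (1 - t) * b.
have ap : a < p by rewrite /p; nra.
have pb : p <= b by rewrite /p; nra.
have p0 : 0 < p by apply: le_lt_trans ap.
have E1 := G_split _ _ a0 (ltW ap).
have E2 := G_split _ _ (ltW p0) pb.
have H1 := int_oc_lb _ _ a0 (ltW ap).
have H2 := int_oc_ub _ _ p0 pb.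
move: E1 E2 H1 H2.
move: (Rintegral mu `]a, p] g) => I1.
move: (Rintegral mu `]p, b] g) => I2.
move=> E1 E2 H1 H2.
have K1 : 0 <= t * (I1 - (p - a) * g p) by apply: mulr_ge0; lra.
have K2 : 0 <= (1 - t) * ((b - p) * g p - I2) by apply: mulr_ge0; lra.
rewrite E2 E1.
move: K1 K2; rewrite /p; nra.
Qed.
End G.

Definition Gi (R : realType) (u : R -> R) (s : R) : R :=
  Rintegral (@lebesgue_measure R) `[0, s] (fun t => u t / t).
Arguments Gi {R}.
Definition Fterm (R : realType) (n : nat) (u : R -> R) (s : R) : R :=
  (1 - n%:R^-1) * Gi u s + n%:R^-1 * u s.
Arguments Fterm {R}.

Lemma Fterm_concave (R : realType) (n : nat) (u : R -> R) (a b t : R) :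
  (0 < n)%N -> concave_on_nonneg u -> u 0 = 0 -> (forall t, 0 <= t -> 0 <= u t) ->
  differentiable_on_nonneg u -> 0 <= a -> 0 <= b -> 0 <= t <= 1 ->
  t * Fterm n u a + (1 - t) * Fterm n u b <= Fterm n u (t * a + (1 - t) * b).
Proof.
move=> n0 hc h0 hpos hd a0 b0 t01.
have HG : t * Gi u a + (1 - t) * Gi u b <= Gi u (t * a + (1 - t) * b) := G_concave _ _ hc h0 hpos hd _ _ _ a0 b0 t01.
have HU := hc a b t a0 b0 t01.
have q0 : 0 < n%:R^-1 :> R by rewrite invr_gt0 ltr0n.
have q1 : n%:R^-1 <= 1 :> R by rewrite invf_le1 ?ltr0n // ler1n.
rewrite /Fterm.
move: HG HU q0 q1.
move: (Gi u a) (Gi u b) (Gi u (t * a + (1 - t) * b)) => Ga Gb Gp.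
move: (u a) (u b) (u (t * a + (1 - t) * b)) (n%:R^-1 : R) => ua ub up q.
move=> HG HU q0 q1.
have K1 : 0 <= (1 - q) * (Gp - (t * Ga + (1 - t) * Gb)) by apply: mulr_ge0; lra.
have K2 : 0 <= q * (up - (t * ua + (1 - t) * ub)) by apply: mulr_ge0; lra.
nra.
Qed.

Lemma Fterm_sconcave (R : realType) (n : nat) (u : R -> R) (a b t : R) :
  (0 < n)%N -> concave_on_nonneg u -> strictly_concave_on_nonneg u -> u 0 = 0 ->
  (forall t, 0 <= t -> 0 <= u t) ->
  differentiable_on_nonneg u -> 0 <= a -> 0 <= b -> a != b -> 0 < t < 1 ->
  t * Fterm n u a + (1 - t) * Fterm n u b < Fterm n u (t * a + (1 - t) * b).
Proof.
move=> n0 hc hs h0 hpos hd a0 b0 ab /andP[t0 t1].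
have t01 : 0 <= t <= 1 by rewrite !ltW.
have HG : t * Gi u a + (1 - t) * Gi u b <= Gi u (t * a + (1 - t) * b) := G_concave _ _ hc h0 hpos hd _ _ _ a0 b0 t01.
have HU := hs a b t a0 b0 ab (andb_true_intro (conj t0 t1)).
have q0 : 0 < n%:R^-1 :> R by rewrite invr_gt0 ltr0n.
have q1 : n%:R^-1 <= 1 :> R by rewrite invf_le1 ?ltr0n // ler1n.
rewrite /Fterm.
move: HG HU q0 q1.
move: (Gi u a) (Gi u b) (Gi u (t * a + (1 - t) * b)) => Ga Gb Gp.
move: (u a) (u b) (u (t * a + (1 - t) * b)) (n%:R^-1 : R) => ua ub up q.
move=> HG HU q0 q1.
have K1 : 0 <= (1 - q) * (Gp - (t * Ga + (1 - t) * Gb)) by apply: mulr_ge0; lra.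
have K2 : 0 < q * (up - (t * ua + (1 - t) * ub)) by apply: mulr_gt0; lra.
nra.
Qed.

Theorem proposition4 (R : realType) (n m : nat)
  (u : 'I_m -> R -> R) (c : 'rV[R]_m -> R) :
  (0 < n)%N -> (0 < m)%N ->
  (forall x t, 0 <= t -> 0 <= u x t) ->
  (forall x, u x 0 = 0) ->
  (forall v, simplex v -> 0 <= c v) ->
  (forall x, concave_on_nonneg (u x)) ->
  (forall x, differentiable_on_nonneg (u x)) ->
  convex_on (@simplex R m) c ->
  (forall v, simplex v -> differentiable c v) ->
  ((exists x0 : 'I_m, forall x, x != x0 -> strictly_concave_on_nonneg (u x))
   \/ strictly_convex_on (@simplex R m) c) ->
  strictly_concave_on (@scaled_simplex R m n%:R) (@potential R m n u c).
Proof.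
move=> n0 m0 upos u0 cpos ucv ud cconv cdiff hstrict a b t [Ha Sa] [Hb Sb] ab /andP[t0 t1].
have t01 : 0 <= t <= 1 by rewrite !ltW.
set q := (n%:R^-1 : R).
have q0 : 0 < q by rewrite invr_gt0 ltr0n.
have nq : n%:R * q = 1 by rewrite mulfV // pnatr_eq0 -lt0n.
have simp : forall v : 'rV[R]_m, scaled_simplex n%:R v -> simplex (q *: v).
  move=> v; case=> Hv Sv; split.
    by move=> i; rewrite mxE mulr_ge0 // ltW.
  by under eq_bigr do rewrite mxE; rewrite -mulr_sumr Sv mulrC nq.
have Ep : q *: (t *: a + (1 - t) *: b) = t *: (q *: a) + (1 - t) *: (q *: b).
  by rewrite scalerDr !scalerA (mulrC q t) (mulrC q (1 - t)).
have Ec : forall x, (t *: a + (1 - t) *: b) ord0 x = t * a ord0 x + (1 - t) * b ord0 x.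
  by move=> x; rewrite !mxE.
rewrite /potential Ep.
have -> : forall s : 'rV[R]_m, \sum_(x < m)
     ((1 - n%:R^-1) * Rintegral (@lebesgue_measure R) `[0, s ord0 x]
                        (fun t => u x t / t)
      + n%:R^-1 * u x (s ord0 x)) = \sum_(x < m) Fterm n (u x) (s ord0 x) by [].
under [X in _ < X - _]eq_bigr do rewrite Ec.
have HSw : t * (\sum_(x < m) Fterm n (u x) (a ord0 x)) + (1 - t) * (\sum_(x < m) Fterm n (u x) (b ord0 x))
   = \sum_(x < m) (t * Fterm n (u x) (a ord0 x) + (1 - t) * Fterm n (u x) (b ord0 x)).
  by rewrite !mulr_sumr -big_split.
have HS : t * (\sum_(x < m) Fterm n (u x) (a ord0 x)) + (1 - t) * (\sum_(x < m) Fterm n (u x) (b ord0 x))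
   <= \sum_(x < m) Fterm n (u x) (t * a ord0 x + (1 - t) * b ord0 x).
  rewrite HSw; apply: ler_sum => x _.
  apply: Fterm_concave; [exact: n0|exact: ucv|exact: u0|exact: upos|exact: ud|exact: Ha|exact: Hb|exact: t01].
have HC : c (t *: (q *: a) + (1 - t) *: (q *: b)) <= t * c (q *: a) + (1 - t) * c (q *: b).
  apply: cconv; [exact: simp|exact: simp|exact: t01].
case: hstrict => [[x0 Hx0]|hsc].
- have HS' : t * (\sum_(x < m) Fterm n (u x) (a ord0 x)) + (1 - t) * (\sum_(x < m) Fterm n (u x) (b ord0 x))
     < \sum_(x < m) Fterm n (u x) (t * a ord0 x + (1 - t) * b ord0 x).
    have /existsP [x1 /andP[x1n ax1]] : [exists x1, (x1 != x0) && (a ord0 x1 != b ord0 x1)].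
      case/boolP: [exists x1, (x1 != x0) && (a ord0 x1 != b ord0 x1)] => // /existsPn H.
      have Hall : forall x, x != x0 -> a ord0 x = b ord0 x.
        by move=> x xn; move: (H x); rewrite xn /= negbK => /eqP.
      have E0 : a ord0 x0 = b ord0 x0.
        move: Sa; rewrite -Sb (bigD1 x0) //= (bigD1 x0 (P := predT)) //=.
        rewrite (eq_bigr (fun x => b ord0 x)); first by move/addIr.
        by move=> x; rewrite ?andTb => xn; rewrite Hall.
      move/eqP: ab; case; apply/matrixP => i j; rewrite (ord1 i).
      by case: (eqVneq j x0) => [->|jn] //; rewrite Hall.
    rewrite HSw (bigD1 x1) //= [X in _ < X](bigD1 x1) //=.
    apply: ltr_leD.
      apply: Fterm_sconcave; [exact: n0|exact: ucv|exact: Hx0|exact: u0|exact: upos|exact: ud|exact: Ha|exact: Hb|exact: ax1|by rewrite t0 t1].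
    apply: ler_sum => x _.
    apply: Fterm_concave; [exact: n0|exact: ucv|exact: u0|exact: upos|exact: ud|exact: Ha|exact: Hb|exact: t01].
  move: HS' HC; set SA := \sum_(x < m) _; set SB := \sum_(x < m) _; set SP := \sum_(x < m) _.
  move: (c _) (c (q *: a)) (c (q *: b)) => CP CA CB HS' HC.
  have nn : 0 < n%:R :> R by rewrite ltr0n.
  have K : n%:R * CP <= n%:R * (t * CA + (1 - t) * CB) by rewrite ler_pM2l.
  nra.
- have HC' : c (t *: (q *: a) + (1 - t) *: (q *: b)) < t * c (q *: a) + (1 - t) * c (q *: b).
    apply: hsc => //; first exact: simp; first exact: simp.
      apply: contra ab => /eqP E; apply/eqP.
      by rewrite -[a]scale1r -[b]scale1r -nq -!scalerA E.
    by rewrite t0 t1.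
  move: HS HC'; set SA := \sum_(x < m) _; set SB := \sum_(x < m) _; set SP := \sum_(x < m) _.
  move: (c _) (c (q *: a)) (c (q *: b)) => CP CA CB HS HC'.
  have nn : 0 < n%:R :> R by rewrite ltr0n.
  have K : n%:R * CP < n%:R * (t * CA + (1 - t) * CB) by rewrite ltr_pM2l.
  nra.
Qed.
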